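(* For each integer $r\ge 1$, let $G_r = (rK_1 \cup (K_1 \nabla (r+1)K_1)) \nabla (rK_1 \cup (K_1 \nabla (r+1)K_1))$, a graph of order $4r+4$. Then $LE(G_r)=LE(K_{4r+4})=8r+6$ (i.e. $G_r$ is $L$-borderenergetic), and $G_r$ and $K_{4r+4}$ have different Laplacian spectra.
   Context: All graphs are finite, simple and undirected. The Laplacian matrix of $G$ is $L(G)=D-A$ ($D$ degree matrix, $A$ adjacency matrix). For a graph $G$ on $n$ vertices with Laplacian eigenvalues $\mu_1,\dots,\mu_n$ and average degree $\overline d = 2|E(G)|/n$, the Laplacian energy is $LE(G)=\sum_{i=1}^n|\mu_i-\overline d|$. One has $LE(K_n)=2n-2$. A graph $G$ on $n$ vertices is $L$-borderenergetic if $LE(G)=LE(K_n)$. $K_m$ is the complete graph on $m$ vertices, $mG$ is the disjoint union of $m$ copies of $G$, $G_1\cup G_2$ is the disjoint union, and the join $G_1\nabla G_2$ is obtained from $G_1\cup G_2$ by adding all edges between a vertex of $G_1$ and a vertex of $G_2$. *)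

(* Defs.v *)
From HB Require Import structures.
From mathcomp Require Import all_boot all_order all_algebra all_field.
Set Implicit Arguments. Unset Strict Implicit. Unset Printing Implicit Defensive.
Import Order.TTheory GRing.Theory Num.Theory.
Local Open Scope ring_scope.

(* A (finite) graph: a finite vertex type and an adjacency relation.
   All graphs built below are simple (symmetric, irreflexive). *)
Record graph := Graph { vert : finType; adj : rel vert }.

Definition gorder (G : graph) : nat := #|vert G|.

Definition K1 : graph := @Graph unit (fun _ _ => false).
Definition empty_graph (m : nat) : graph := @Graph 'I_m (fun _ _ => false).
Definition complete (n : nat) : graph := @Graph 'I_n (fun i j => i != j).

Definition gunion (G H : graph) : graph :=
  @Graph (vert G + vert H)%type
    (fun x y => match x, y with
                | inl a, inl b => adj a b
                | inr a, inr b => adj a b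
                | _, _ => false end).

Definition gjoin (G H : graph) : graph :=
  @Graph (vert G + vert H)%type
    (fun x y => match x, y with
                | inl a, inl b => adj a b
                | inr a, inr b => adj a b
                | _, _ => true end).

Definition degree (G : graph) (x : vert G) : nat := #|[pred y | adj x y]|.

Definition laplacian (G : graph) : 'M[algC]_(gorder G) :=
  \matrix_(i, j)
    ((if i == j then (degree (enum_val i))%:R else 0)
     - (adj (enum_val i) (enum_val j))%:R).

(* Laplacian spectrum: the roots (with multiplicity) of the characteristic
   polynomial of L (monic, so lead_coef = 1). *)
Definition lspec (G : graph) : seq algC :=
  sval (closed_field_poly_normal (char_poly (laplacian G))).

Definition avg_degree (G : graph) : algC :=
  (\sum_(x : vert G) (degree x)%:R) / (gorder G)%:R.

Definition LE (G : graph) : algC :=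
  \sum_(mu <- lspec G) `|mu - avg_degree G|.

Definition Hr (r : nat) : graph :=
  gunion (empty_graph r) (gjoin K1 (empty_graph r.+1)).
Definition Gr (r : nat) : graph := gjoin (Hr r) (Hr r).

(* Main.v *)
Require Import Defs.
From HB Require Import structures.
From mathcomp Require Import all_boot all_order all_algebra all_field.
From mathcomp Require Import ring zify.
Set Implicit Arguments. Unset Strict Implicit. Unset Printing Implicit Defensive.
Import Order.TTheory GRing.Theory Num.Theory.
Local Open Scope ring_scope.

Definition lap (G : graph) (x y : vert G) : algC :=
  (if x == y then (degree x)%:R else 0) - (adj x y)%:R.
Definition lapv (G : graph) (q : vert G -> algC) (y : vert G) : algC :=
  \sum_x q x * lap x y.
Definition dot (T : finType) (p q : T -> algC) : algC := \sum_x p x * q x.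

Definition good (G : graph) (x0 : vert G) (b : vert G -> vert G -> algC)
  (lam : vert G -> algC) : Prop :=
  [/\ forall y, b x0 y = 1, lam x0 = 0,
     forall x y, lapv (b x) y = lam x * b x y,
     forall x x', x != x' -> dot (b x) (b x') = 0 &
     forall x, dot (b x) (b x) != 0].

Lemma charp_good (G : graph) x0 b lam : @good G x0 b lam ->
  char_poly (laplacian G) = \prod_(x : vert G) ('X - (lam x)%:P)
  /\ \tr (laplacian G) = \sum_(x : vert G) lam x.
Proof.
case=> b0 l0 eig ort nrm.
pose n := gorder G.
pose P : 'M[algC]_n := \matrix_(i, j) b (enum_val i) (enum_val j).
pose d : 'rV[algC]_n := \row_i lam (enum_val i).
have PL : P *m laplacian G = diag_mx d *m P.
  apply/matrixP => i j; rewrite mul_diag_mx !mxE.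
  rewrite -[RHS]/(lam (enum_val i) * b (enum_val i) (enum_val j)) -eig /lapv.
  rewrite (big_enum_val (fun x => b (enum_val i) x * lap x (enum_val j))) /=.
  apply: eq_bigr => k _; rewrite !mxE /lap (inj_eq enum_val_inj).
  by [].
have detP : \det P != 0.
  have G1 : P *m P^T = diag_mx (\row_i dot (b (enum_val i)) (b (enum_val i))).
    apply/matrixP => i j; rewrite !mxE.
    rewrite -[X in _ = X *+ _]/(dot (b (enum_val i)) (b (enum_val i))).
    have -> : \sum_k P i k * P^T k j = dot (b (enum_val i)) (b (enum_val j)).
      rewrite /dot (big_enum_val (fun x => b (enum_val i) x * b (enum_val j) x)) /=.
      by apply: eq_bigr => k _; rewrite !mxE.
    have [->|ij] := eqVneq i j; first by rewrite mulr1n.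
    by rewrite mulr0n ort // (inj_eq enum_val_inj).
  have : \det (P *m P^T) != 0.
    rewrite G1 det_diag; apply/prodf_neq0 => i _; rewrite mxE; exact: nrm.
  by rewrite det_mulmx; apply: contra => /eqP ->; rewrite mul0r.
split.
  have E : map_mx polyC P *m char_poly_mx (laplacian G)
           = char_poly_mx (diag_mx d) *m map_mx polyC P.
    rewrite /char_poly_mx mulmxBr mulmxBl mul_mx_scalar mul_scalar_mx.
    by rewrite -!map_mxM PL.
  have := congr1 determinant E; rewrite !det_mulmx det_map_mx.
  rewrite mulrC => /mulIf H.
  have -> : char_poly (laplacian G) = char_poly (diag_mx d).
    apply: H; by rewrite polyC_eq0.
  rewrite char_poly_trig ?diag_mx_is_trig //.
  rewrite (big_enum_val (fun x => 'X - (lam x)%:P)) /=.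
  by apply: eq_bigr => i _; rewrite !mxE eqxx mulr1n.
have uP : P \in unitmx by rewrite unitmxE unitfE.
have -> : laplacian G = invmx P *m (diag_mx d *m P).
  by rewrite -PL mulmxA mulVmx // mul1mx.
rewrite mxtrace_mulC -mulmxA mulmxV // mulmx1 mxtrace_diag.
rewrite (big_enum_val lam) /=.
by apply: eq_bigr => i _; rewrite mxE.
Qed.

Lemma lspec_good (G : graph) x0 b lam : @good G x0 b lam ->
  perm_eq (lspec G) [seq lam x | x <- enum (vert G)].
Proof.
move=> /charp_good [cp _]; rewrite /lspec.
case: (closed_field_poly_normal _) => s /= Hs.
apply: prod_XsubC_eq; rewrite big_map big_enum /= -cp.
by rewrite Hs (monicP (char_poly_monic _)) scale1r.
Qed.

Lemma trace_irr (G : graph) : (forall x : vert G, ~~ adj x x) ->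
  \tr (laplacian G) = \sum_(x : vert G) (degree x)%:R.
Proof.
move=> irr; rewrite /mxtrace (big_enum_val (fun x => (degree x)%:R)) /=.
by apply: eq_bigr => i _; rewrite mxE eqxx (negbTE (irr _)) subr0.
Qed.

Lemma LE_good (G : graph) x0 b lam : @good G x0 b lam ->
  (forall x : vert G, ~~ adj x x) ->
  LE G = \sum_(x : vert G) `|lam x - (\sum_(y : vert G) lam y) / (gorder G)%:R|.
Proof.
move=> gd irr; rewrite /LE /avg_degree -trace_irr // (proj2 (charp_good gd)).
by rewrite (perm_big _ (lspec_good gd)) big_map big_enum.
Qed.

Lemma degE (G : graph) (x : vert G) : (degree x)%:R = \sum_y (adj x y)%:R :> algC.
Proof.
rewrite /degree -sum1_card natr_sum big_mkcond /=.
by apply: eq_bigr => y _; rewrite inE; case: (adj x y).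
Qed.

Lemma lapvE (G : graph) (q : vert G -> algC) y :
  lapv q y = q y * (\sum_z (adj y z)%:R) - \sum_x q x * (adj x y)%:R.
Proof.
rewrite /lapv /lap; under eq_bigr do rewrite mulrBr.
rewrite sumrB (bigD1 y) //= eqxx big1 ?addr0 ?degE // => x /negbTE ->.
by rewrite mulr0.
Qed.

Lemma sumS (A B : finType) (F : A + B -> algC) :
  \sum_z F z = \sum_a F (inl a) + \sum_c F (inr c).
Proof. by rewrite big_sumType. Qed.

Lemma lapv_ext (G : graph) (p q : vert G -> algC) z :
  (forall y, p y = q y) -> lapv p z = lapv q z.
Proof. by move=> e; apply: eq_bigr => x _; rewrite e. Qed.

Lemma lapv_scale (G : graph) (p : vert G -> algC) k z :
  lapv (fun y => k * p y) z = k * lapv p z.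
Proof. by rewrite /lapv mulr_sumr; apply: eq_bigr => x _; rewrite mulrA. Qed.

Lemma lapv0 (G : graph) (z : vert G) : lapv (fun _ => 0) z = 0.
Proof. by rewrite /lapv big1 // => x _; rewrite mul0r. Qed.

Lemma lapvU_l (G H : graph) (q : vert (gunion G H) -> algC) (b : vert G) :
  lapv q (inl b) = lapv (fun a => q (inl a)) b.
Proof.
rewrite !lapvE !sumS /=.
rewrite [\sum_c (false%:R : algC)]big1 // [\sum_c (q (inr c) * false%:R)]big1 //.
  by rewrite !addr0.
by move=> c _; rewrite mulr0.
Qed.

Lemma lapvU_r (G H : graph) (q : vert (gunion G H) -> algC) (b : vert H) :
  lapv q (inr b) = lapv (fun a => q (inr a)) b.
Proof.
rewrite !lapvE !sumS /=.
rewrite [\sum_c (false%:R : algC)]big1 // [\sum_c (q (inl c) * false%:R)]big1 //.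
  by rewrite !add0r.
by move=> c _; rewrite mulr0.
Qed.

Lemma sum1T (T : finType) : \sum_(x : T) (1 : algC) = #|T|%:R.
Proof. by rewrite sumr_const. Qed.

Lemma lapvJ_l (G H : graph) (q : vert (gjoin G H) -> algC) (b : vert G) :
  lapv q (inl b) = lapv (fun a => q (inl a)) b + q (inl b) * #|vert H|%:R
     - \sum_c q (inr c).
Proof.
rewrite !lapvE !sumS /= sum1T.
under [\sum_c (q (inr c) * true%:R)]eq_bigr do rewrite mulr1.
rewrite mulrDr; set s1 := \sum_(i : vert G) _; set s2 := \sum_(i : vert G) _.
set s3 := \sum_c _; set s4 := _ * _%:R.
by rewrite opprD !addrA; ring.
Qed.

Lemma lapvJ_r (G H : graph) (q : vert (gjoin G H) -> algC) (b : vert H) :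
  lapv q (inr b) = lapv (fun a => q (inr a)) b + q (inr b) * #|vert G|%:R
     - \sum_c q (inl c).
Proof.
rewrite !lapvE !sumS /= sum1T.
under [\sum_c (q (inl c) * true%:R)]eq_bigr do rewrite mulr1.
rewrite mulrDr addrC.
set s1 := \sum_(i : vert H) _; set s2 := \sum_(i : vert H) _.
set s3 := \sum_c _; set s4 := _ * _%:R.
by rewrite opprD !addrA; ring.
Qed.

Definition combb (A B : finType) (x0 : A) (y0 : B) (bG : A -> A -> algC)
  (bH : B -> B -> algC) : A + B -> A + B -> algC :=
  fun z w => match z with
  | inl a => if a == x0 then 1 else
      match w with inl a' => bG a a' | inr _ => 0 end
  | inr c => if c == y0 then
      match w with inl _ => #|B|%:R | inr _ => - #|A|%:R end
      else match w with inl _ => 0 | inr c' => bH c c' end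
  end.

Lemma sum0G (A : finType) (x0 : A) (b : A -> A -> algC) :
  (forall y, b x0 y = 1) -> (forall x x', x != x' -> dot (b x) (b x') = 0) ->
  forall a, a != x0 -> \sum_y b a y = 0.
Proof.
move=> b1 ort a ax; transitivity (dot (b a) (b x0)); last exact: ort.
rewrite /dot.
by apply: eq_bigr => y _; rewrite b1 mulr1.
Qed.

Lemma card_pos (A : finType) (x0 : A) : (#|A|%:R : algC) != 0.
Proof. by rewrite pnatr_eq0 -lt0n; apply/card_gt0P; exists x0. Qed.

Lemma comb_ortho (A B : finType) (x0 : A) (y0 : B) bG bH :
  (forall y, bG x0 y = 1) -> (forall x x', x != x' -> dot (bG x) (bG x') = 0) ->
  (forall y, bH y0 y = 1) -> (forall x x', x != x' -> dot (bH x) (bH x') = 0) ->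
  forall z z', z != z' -> dot (combb x0 y0 bG bH z) (combb x0 y0 bG bH z') = 0.
Proof.
move=> g1 go h1 ho.
have sg := sum0G g1 go; have sh := sum0G h1 ho.
move=> [a|c] [a'|c'] neq; rewrite /dot sumS /=.
- case: (eqVneq a x0) => ax; case: (eqVneq a' x0) => ax'.
  + by move: neq; rewrite ax ax' eqxx.
  + rewrite -?mulr_sumr -?mulr_suml ?sg ?sh // ?big1_eq ?sumr_const; ring.
  + rewrite -?mulr_sumr -?mulr_suml ?sg ?sh // ?big1_eq ?sumr_const; ring.
  + rewrite -?mulr_sumr -?mulr_suml mul0r addr0; apply: go.
    by apply: contra neq => /eqP ->.
- case: (eqVneq a x0) => ax; case: (eqVneq c' y0) => ax';
  rewrite -?mulr_sumr -?mulr_suml ?sg ?sh // ?big1_eq ?sum1T; rewrite ?sumr_const; ring.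
- case: (eqVneq c y0) => ax; case: (eqVneq a' x0) => ax';
  rewrite -?mulr_sumr -?mulr_suml ?sg ?sh // ?big1_eq ?sumr_const; ring.
- case: (eqVneq c y0) => ax; case: (eqVneq c' y0) => ax'.
  + by move: neq; rewrite ax ax' eqxx.
  + rewrite -?mulr_sumr -?mulr_suml ?sg ?sh // ?big1_eq ?sumr_const; ring.
  + rewrite -?mulr_sumr -?mulr_suml ?sg ?sh // ?big1_eq ?sumr_const; ring.
  + rewrite -?mulr_sumr -?mulr_suml mul0r add0r; apply: ho.
    by apply: contra neq => /eqP ->.
Qed.

Lemma comb_norm (A B : finType) (x0 : A) (y0 : B) bG bH :
  (forall x, dot (bG x) (bG x) != 0) -> (forall x, dot (bH x) (bH x) != 0) ->
  forall z, dot (combb x0 y0 bG bH z) (combb x0 y0 bG bH z) != 0.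
Proof.
move=> gn hn.
have cA : (0 < #|A|)%N by apply/card_gt0P; exists x0.
have cB : (0 < #|B|)%N by apply/card_gt0P; exists y0.
move=> [a|c]; rewrite /dot sumS /=.
- case: (eqVneq a x0) => ax.
  + rewrite !sumr_const.
    have -> : (1 * 1 : algC) *+ #|A| + (1 * 1) *+ #|B| = (#|A| + #|B|)%:R.
      by rewrite mulr1 natrD.
    by rewrite pnatr_eq0 addn_eq0 negb_and -!lt0n cA.
  + rewrite [X in _ + X](eq_bigr (fun _ => 0)) ?big1_eq ?addr0; first exact: gn.
    by move=> i _; rewrite mulr0.
- case: (eqVneq c y0) => cy.
  + rewrite !sumr_const.
    have -> : (#|B|%:R * #|B|%:R : algC) *+ #|A| + (- #|A|%:R * - #|A|%:R) *+ #|B|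
        = (#|A| * #|B| * (#|A| + #|B|))%:R.
      ring.
    rewrite pnatr_eq0 !muln_eq0 addn_eq0; move: cA cB; case: #|A|; case: #|B|; done.
  + rewrite [X in X + _](eq_bigr (fun _ => 0)) ?big1_eq ?add0r; first exact: hn.
    by move=> i _; rewrite mulr0.
Qed.

Lemma lapv_const (G : graph) x0 b lam : @good G x0 b lam ->
  forall k w, @lapv G (fun _ => k) w = 0.
Proof.
case=> b1 l0 eig _ _ k w.
rewrite (@lapv_ext _ _ (fun y => k * b x0 y)) ?lapv_scale ?eig ?l0 ?mul0r ?mulr0 //.
by move=> y; rewrite b1 mulr1.
Qed.

Lemma good_sum0 (G : graph) x0 b lam : @good G x0 b lam ->
  forall a, a != x0 -> \sum_y b a y = 0.
Proof. by case=> b1 _ _ ort _; apply: sum0G. Qed.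

Definition lamU (A B : finType) (lG : A -> algC) (lH : B -> algC) (z : A + B) :=
  match z with inl a => lG a | inr c => lH c end.

Lemma good_union (G H : graph) x0 y0 bG bH lG lH :
  @good G x0 bG lG -> @good H y0 bH lH ->
  @good (gunion G H) (inl x0) (combb x0 y0 bG bH) (lamU lG lH).
Proof.
move=> gG gH.
have cG := lapv_const gG; have cH := lapv_const gH.
case: (gG) => g1 gl0 geig gort gn; case: (gH) => h1 hl0 heig hort hn.
split.
- by move=> y; rewrite /combb eqxx.
- by [].
- move=> [a|c] [b|d].
  + rewrite lapvU_l /=; case: (eqVneq a x0) => ax.
    * by rewrite cG ax gl0 mul0r.
    * exact: geig.
  + rewrite lapvU_r /=; case: (eqVneq a x0) => ax.
    * by rewrite cH ax gl0 mul0r.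
    * by rewrite cH mulr0.
  + rewrite lapvU_l /=; case: (eqVneq c y0) => cy.
    * by rewrite cG cy hl0 mul0r.
    * by rewrite cG mulr0.
  + rewrite lapvU_r /=; case: (eqVneq c y0) => cy.
    * by rewrite cH cy hl0 mul0r.
    * exact: heig.
- exact: comb_ortho.
- exact: comb_norm.
Qed.

Definition lamJ (A B : finType) (x0 : A) (y0 : B) (lG : A -> algC) (lH : B -> algC)
  (z : A + B) :=
  match z with
  | inl a => if a == x0 then 0 else lG a + #|B|%:R
  | inr c => if c == y0 then #|A|%:R + #|B|%:R else lH c + #|A|%:R end.

Lemma good_join (G H : graph) x0 y0 bG bH lG lH :
  @good G x0 bG lG -> @good H y0 bH lH ->
  @good (gjoin G H) (inl x0) (combb x0 y0 bG bH) (lamJ x0 y0 lG lH).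
Proof.
move=> gG gH.
have cG := lapv_const gG; have cH := lapv_const gH.
have sG := good_sum0 gG; have sH := good_sum0 gH.
case: (gG) => g1 gl0 geig gort gn; case: (gH) => h1 hl0 heig hort hn.
split.
- by move=> y; rewrite /combb eqxx.
- by rewrite /= eqxx.
- move=> [a|c] [b|d].
  + rewrite lapvJ_l /=; case: (eqVneq a x0) => ax.
    * rewrite cG sumr_const; ring.
    * rewrite geig big1_eq; ring.
  + rewrite lapvJ_r /=; case: (eqVneq a x0) => ax.
    * rewrite cH sumr_const; ring.
    * rewrite cH sG //; ring.
  + rewrite lapvJ_l /=; case: (eqVneq c y0) => cy.
    * rewrite cG sumr_const; ring.
    * rewrite cG sH //; ring.
  + rewrite lapvJ_r /=; case: (eqVneq c y0) => cy.
    * rewrite cH sumr_const; ring.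
    * rewrite heig big1_eq; ring.
- exact: comb_ortho.
- exact: comb_norm.
Qed.

Definition helm (n : nat) (k y : 'I_n.+1) : algC :=
  if k == ord0 then 1 else if (y < k)%N then 1 else if y == k then - (k%:R) else 0.

Lemma sum_lt N k : \sum_(y < N) (if (y < k)%N then 1 else 0 : algC) = (minn k N)%:R.
Proof.
elim: N => [|N IH]; first by rewrite big_ord0 minn0.
rewrite big_ord_recr /= IH.
case: (ltnP N k) => h.
  by rewrite natr1; congr (_%:R); lia.
by rewrite addr0; congr (_%:R); lia.
Qed.

Lemma sum_eq1 (T : finType) (k : T) (c : algC) :
  \sum_(y : T) (if y == k then c else 0) = c.
Proof. by rewrite (bigD1 k) //= eqxx big1 ?addr0 // => y /negbTE ->. Qed.

Lemma helm_pt n (k y : 'I_n.+1) : k != ord0 ->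
  helm k y = (if (y < k)%N then 1 else 0) + (if y == k then - (k%:R) else 0).
Proof.
move=> /negbTE k0; rewrite /helm k0.
case: (ltnP y k) => h; last by rewrite add0r.
have /negbTE -> : y != k by apply/eqP => e; move: h; rewrite e ltnn.
by rewrite addr0.
Qed.

Lemma helm_sum n (k : 'I_n.+1) : k != ord0 -> \sum_y helm k y = 0.
Proof.
move=> k0; under eq_bigr do rewrite helm_pt //.
rewrite big_split /= sum_lt sum_eq1.
have -> : minn k n.+1 = k by have := ltn_ord k; lia.
by rewrite subrr.
Qed.

Lemma helm0 n (y : 'I_n.+1) : helm ord0 y = 1.
Proof. by rewrite /helm eqxx. Qed.

Lemma dotC (T : finType) (p q : T -> algC) : dot p q = dot q p.
Proof. by apply: eq_bigr => x _; rewrite mulrC. Qed.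

Lemma helm_ortho n (k k' : 'I_n.+1) : k != k' -> dot (helm k) (helm k') = 0.
Proof.
wlog lt : k k' / (k < k')%N.
  move=> W kk; case: (ltngtP k k') => h; first exact: W.
    by rewrite dotC; apply: W; rewrite // eq_sym.
  by move: kk; rewrite (val_inj h) eqxx.
move=> kk.
have k'0 : k' != ord0 by apply/eqP => e; move: lt; rewrite e.
case: (eqVneq k ord0) => k0.
  transitivity (\sum_y helm k' y); last exact: helm_sum.
  by apply: eq_bigr => y _; rewrite k0 helm0 mul1r.
transitivity (\sum_y helm k y); last exact: helm_sum.
apply: eq_bigr => y _.
rewrite [helm k' y]/helm (negbTE k'0).
case: (ltnP y k') => h; first by rewrite mulr1.
have -> : helm k y = 0.
  rewrite /helm (negbTE k0).
  have -> : (y < k)%N = false by apply/negbTE; rewrite -leqNgt; lia.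
  by have /negbTE -> : y != k by apply/eqP => e'; move: h lt; rewrite e'; lia.
by rewrite mul0r.
Qed.

Lemma helm_norm n (k : 'I_n.+1) : dot (helm k) (helm k) != 0.
Proof.
case: (eqVneq k ord0) => k0.
  rewrite /dot k0 (eq_bigr (fun _ => 1)); last by move=> y _; rewrite helm0 mulr1.
  by rewrite sum1T card_ord pnatr_eq0.
have -> : dot (helm k) (helm k) = (k + k * k)%:R.
  rewrite /dot (eq_bigr (fun y : 'I_n.+1 => (if (y < k)%N then 1 else 0) +
                   (if y == k then (k * k)%:R else 0))).
    rewrite big_split /= sum_lt sum_eq1 natrD.
    by have -> : minn k n.+1 = k by have := ltn_ord k; lia.
  move=> y _; rewrite helm_pt //.
  case: (ltnP y k) => h.
    have /negbTE -> : y != k by apply/eqP => e; move: h; rewrite e ltnn.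
    by rewrite !addr0 mulr1.
  case: (eqVneq y k) => e; last by rewrite !addr0 mulr0.
  by rewrite !add0r mulrNN natrM.
rewrite pnatr_eq0; have : k != 0%N :> nat by [].
by move=> /negbTE kk; rewrite addn_eq0 kk.
Qed.

Lemma good_empty m : @good (empty_graph m.+1) ord0 (@helm m) (fun _ => 0).
Proof.
split.
- exact: helm0.
- by [].
- move=> x y; rewrite lapvE /= mul0r.
  rewrite big1_eq (eq_bigr (fun _ => 0)) ?big1_eq ?mulr0 ?subr0 //.
  by move=> i _; rewrite mulr0.
- exact: helm_ortho.
- exact: helm_norm.
Qed.

Lemma good_K1 : @good K1 tt (fun _ _ => 1) (fun _ => 0).
Proof.
split => //.
- move=> _ y; rewrite lapvE /= mul0r.
  rewrite big1_eq (eq_bigr (fun _ => 0)) ?big1_eq ?mulr0 ?subr0 //.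
- move=> x; rewrite /dot (eq_bigr (fun _ => 1)); last by move=> i _; rewrite mulr1.
  by rewrite sum1T card_unit oner_eq0.
Qed.

Lemma lapv_complete m (q : 'I_m.+1 -> algC) y :
  @lapv (complete m.+1) q y = q y * (m.+1)%:R - \sum_x q x.
Proof.
rewrite lapvE /=.
have e1 : \sum_(z : 'I_m.+1) ((y != z)%:R : algC) = m%:R.
  rewrite (eq_bigr (fun z => 1 - (if z == y then 1 else 0))).
    by rewrite sumrB sum1T sum_eq1 card_ord -natr1 addrK.
  by move=> z _; rewrite eq_sym; case: (z == y); rewrite ?subrr ?subr0.
have e2 : \sum_(x : 'I_m.+1) q x * (x != y)%:R = \sum_x q x - q y.
  rewrite (eq_bigr (fun x => q x - (if x == y then q y else 0))).
    by rewrite sumrB sum_eq1.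
  move=> x _; case: (eqVneq x y) => [->|_]; first by rewrite mulr0 subrr.
  by rewrite mulr1 subr0.
rewrite e1 e2 -natr1; ring.
Qed.

Definition lamK m (k : 'I_m.+1) : algC := if k == ord0 then 0 else (m.+1)%:R.

Lemma good_complete m : @good (complete m.+1) ord0 (@helm m) (@lamK m).
Proof.
split.
- exact: helm0.
- by rewrite /lamK eqxx.
- move=> x y; rewrite lapv_complete /lamK.
  case: (eqVneq x ord0) => x0.
    rewrite x0 (eq_bigr (fun _ => 1)) ?sum1T ?card_ord ?helm0; last by move=> *; rewrite helm0.
    by rewrite mul1r subrr mul0r.
  by rewrite helm_sum // subr0 mulrC.
- exact: helm_ortho.
- exact: helm_norm.
Qed.

Definition lamS s := lamJ tt (@ord0 s.+1) (fun _ : unit => 0) (fun _ : 'I_s.+2 => 0).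
Definition lamH s := lamU (fun _ : 'I_s.+1 => 0) (@lamS s).
Definition lamG s := lamJ (inl ord0 : vert (Hr s.+1)) (inl ord0 : vert (Hr s.+1)) (@lamH s) (@lamH s).

Lemma goodG s : exists b, @good (Gr s.+1) (inl (inl ord0)) b (@lamG s).
Proof.
have gS := good_join good_K1 (good_empty s.+1).
have gH := good_union (good_empty s) gS.
eexists; exact: (good_join gH gH).
Qed.

Lemma cardH s : #|vert (Hr s.+1)| = (2 * s + 4)%N.
Proof. rewrite /= card_sum card_sum card_ord card_unit card_ord; lia. Qed.

Lemma sumG s (F : algC -> algC) :
  \sum_(x : vert (Gr s.+1)) F (@lamG s x) =
  F 0 + F (4 * s + 8)%:R + (F (2 * s + 4)%:R + F (2 * s + 5)%:R) *+ (2 * s + 2)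
  + F (3 * s + 7)%:R *+ 2.
Proof.
rewrite sumS /= !sumS /= !big_ord_recl /=.
rewrite !sumr_const !card_sum !card_ord !card_unit.
have a1 : (0 + (s.+1 + (1 + s.+2))%:R : algC) = (2*s+4)%:R.
  by rewrite add0r; congr _%:R; lia.
have a2 : (1%:R + (s.+2)%:R + (s.+1 + (1 + s.+2))%:R : algC) = (3*s+7)%:R.
  by rewrite -!natrD; congr _%:R; lia.
have a3 : (0 + 1%:R + (s.+1 + (1 + s.+2))%:R : algC) = (2*s+5)%:R.
  by rewrite add0r -!natrD; congr _%:R; lia.
have a4 : ((s.+1 + (1 + s.+2))%:R + (s.+1 + (1 + s.+2))%:R : algC) = (4*s+8)%:R.
  by rewrite -!natrD; congr _%:R; lia.
rewrite a1 a2 a3 a4.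
ring.
Qed.

Lemma absnB (a b : nat) : (b <= a)%N -> `|a%:R - b%:R : algC| = (a - b)%:R.
Proof. by move=> h; rewrite -natrB // normr_nat. Qed.

Lemma absnB' (a b : nat) : (a <= b)%N -> `|a%:R - b%:R : algC| = (b - a)%:R.
Proof. by move=> h; rewrite -normrN opprB absnB. Qed.

Lemma irrG s (x : vert (Gr s.+1)) : ~~ adj x x.
Proof. by case: x => [[a|[[]|c]]|[a|[[]|c]]]. Qed.

Lemma irrK m (x : vert (complete m)) : ~~ adj x x.
Proof. by rewrite /= eqxx. Qed.

Lemma sumK m (F : algC -> algC) :
  \sum_(k : vert (complete m.+1)) F (@lamK m k) = F 0 + F (m.+1)%:R *+ m.
Proof.
rewrite big_ord_recl /lamK eqxx; congr (_ + _).
rewrite (eq_bigr (fun _ => F (m.+1)%:R)) ?sumr_const ?card_ord //.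
Qed.

Lemma LEG s : LE (Gr s.+1) = (8 * s.+1 + 6)%:R.
Proof.
have [b gd] := goodG s.
rewrite (LE_good gd (@irrG s)).
have -> : gorder (Gr s.+1) = (4 * s + 8)%N by rewrite /gorder /= card_sum cardH; lia.
have -> : \sum_(y : vert (Gr s.+1)) @lamG s y = ((2 * s + 5) * (4 * s + 8))%:R.
  rewrite (sumG s id) /=; ring.
rewrite natrM mulfK ?pnatr_eq0 ?addn_eq0 ?andbF //.
rewrite (sumG s (fun z => `|z - (2 * s + 5)%:R|)).
rewrite sub0r normrN normr_nat subrr normr0.
rewrite (absnB (a := (4 * s + 8)%N)); last lia.
rewrite (absnB' (a := (2 * s + 4)%N)); last lia.
rewrite (absnB (a := (3 * s + 7)%N)); last lia.
have -> : (4 * s + 8 - (2 * s + 5) = 2 * s + 3)%N by lia.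
have -> : (2 * s + 5 - (2 * s + 4) = 1)%N by lia.
have -> : (3 * s + 7 - (2 * s + 5) = s + 2)%N by lia.
ring.
Qed.

Lemma LEK m : LE (complete m.+1) = (2 * m)%:R.
Proof.
rewrite (LE_good (good_complete m) (@irrK _)).
have -> : gorder (complete m.+1) = m.+1 by rewrite /gorder /= card_ord.
rewrite (sumK m id) /=.
have -> : (0 + (m.+1)%:R *+ m : algC) = m%:R * (m.+1)%:R.
  by rewrite add0r -mulr_natr mulrC.
rewrite mulfK ?pnatr_eq0 //.
rewrite (sumK m (fun z => `|z - m%:R|)) sub0r normrN normr_nat absnB //.
have -> : (m.+1 - m = 1)%N by lia.
ring.
Qed.

Lemma not_perm s : ~ perm_eq (lspec (Gr s.+1)) (lspec (complete (4 * s + 7).+1)).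
Proof.
move=> pe.
have [b gd] := goodG s.
have pG := lspec_good gd.
have pK := lspec_good (good_complete (4 * s + 7)).
pose x : vert (Gr s.+1) := inl (inr (inl tt)).
have xin : @lamG s x \in lspec (Gr s.+1).
  by rewrite (perm_mem pG); apply: map_f; rewrite mem_enum.
move: xin; rewrite (perm_mem pe) (perm_mem pK) => /mapP [k _].
have -> : @lamG s x = (2 * s + 4)%:R.
  by rewrite /= cardH add0r.
rewrite /lamK; case: (k == ord0) => /eqP.
  by rewrite pnatr_eq0; lia.
by rewrite eqr_nat; lia.
Qed.

Unset Implicit Arguments.

Theorem theorem2 (r : nat) (hr : (1 <= r)%N) :
  gorder (Gr r) = (4 * r + 4)%N /\
  LE (Gr r) = LE (complete (4 * r + 4)) /\
  LE (complete (4 * r + 4)) = (8 * r + 6)%:R /\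
  ~ perm_eq (lspec (Gr r)) (lspec (complete (4 * r + 4))).
Proof.
case: r hr => // s _.
have e : (4 * s.+1 + 4 = (4 * s + 7).+1)%N by lia.
rewrite e LEG LEK.
have -> : (2 * (4 * s + 7) = 8 * s.+1 + 6)%N by lia.
split; last split => //; last split => //.
  by rewrite /gorder /= card_sum cardH; lia.
exact: not_perm.
Qed.
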